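(* Let $\Theta$ be a variety of universal algebras of a fixed signature, let $H_1,H_2$ be $\Theta$-algebras, and let $\bar a=(a_1,\dots,a_n)$ and $\bar b=(b_1,\dots,b_n)$ be $n$-tuples of elements of $H_1$ and $H_2$ respectively. Let $X=\{x_1,\dots,x_n\}$ and let $\nu:W(X)\to H_1$, $\mu:W(X)\to H_2$ be the homomorphisms with $\nu(x_i)=a_i$ and $\mu(x_i)=b_i$ for $i=1,\dots,n$. Then $LKer(\nu)=LKer(\mu)$ if and only if $tp^{H_1}(\bar a)=tp^{H_2}(\bar b)$.
   Context: $X^0=\{x_1,x_2,\dots\}$ is an infinite set of variables; for a finite $X\subset X^0$, $W(X)$ denotes the free $\Theta$-algebra on $X$. A homomorphism $\mu:W(X)\to H$ is called a point. For each finite $X\subset X^0$ the set $\Phi(X)$ of formulas of sort $X$ is defined inductively: (1) every equality $w\equiv w'$ with $w,w'\in W(X)$ is in $\Phi(X)$; (2) if $u,u_1,u_2\in\Phi(X)$ and $x\in X$, then $\neg u$, $\exists x\,u$, $u_1\vee u_2$, $u_1\wedge u_2$ are in $\Phi(X)$; (3) if $s:W(X)\to W(Y)$ is a homomorphism ($Y\subset X^0$ finite) and $u\in\Phi(X)$, then $s_*u\in\Phi(Y)$. The value $Val^X_H(u)\subseteq \mathrm{Hom}(W(X),H)$ is defined by: $Val^X_H(w\equiv w')=\{\mu:\mu(w)=\mu(w')\}$; $\mu\in Val^X_H(\exists x\,u)$ iff there is a point $\nu:W(X)\to H$ agreeing with $\mu$ on $X\setminus\{x\}$ with $\nu\in Val^X_H(u)$;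 $\vee,\wedge,\neg$ are interpreted as union, intersection and complement in $\mathrm{Hom}(W(X),H)$; for $s:W(X)\to W(Y)$, $\mu\in Val^Y_H(s_*u)$ iff $\mu\circ s\in Val^X_H(u)$. The logical kernel of a point $\mu:W(X)\to H$ is $LKer(\mu)=\{u\in\Phi(X):\mu\in Val^X_H(u)\}$. The (model-theoretic) type $tp^{H}(\bar a)$ of an $n$-tuple $\bar a$ in $H$ is the set of all first-order formulas $u(x_1,\dots,x_n)$ of the first-order language with equality of the signature of $\Theta$, whose free variables are among $x_1,\dots,x_n$ (all other variables bound), such that $H\models u(a_1,\dots,a_n)$. *)

(* Defs.v *)
From mathcomp Require Import all_boot.
Set Implicit Arguments. Unset Strict Implicit. Unset Printing Implicit Defensive.

Record signature := Signature { sym : Type ; arity : sym -> nat }.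

Inductive term (S : signature) (V : Type) : Type :=
| Var : V -> term S V
| Op (f : sym S) : ('I_(arity f) -> term S V) -> term S V.
Arguments Var {S V}. Arguments Op {S V}.

Record algebra (S : signature) := Algebra {
  carrier :> Type ;
  ops : forall f : sym S, ('I_(arity f) -> carrier) -> carrier }.

Fixpoint eval (S : signature) (A : algebra S) (V : Type) (e : V -> A) (t : term S V) : A :=
  match t with
  | Var v => e v
  | Op f args => @ops S A f (fun i => eval e (args i))
  end.

(* A variety Theta is given by a set of identities l = r (terms in variables nat);
   a Theta-algebra is an algebra satisfying all of them. *)
Definition identities (S : signature) := term S nat -> term S nat -> Prop.
Definition is_Theta_algebra (S : signature) (Th : identities S) (A : algebra S) : Prop :=
  forall l r, Th l r -> forall e : nat -> A, eval e l = eval e r.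

(* Sorts: finite sets X of variables x_k (k : nat), given as seq nat. *)
Definition var (X : seq nat) := {x : nat | x \in X}.

(* Elements of W(X) are represented by terms over X (representatives of their
   Theta-classes); homomorphisms W(X) -> W(Y) by their values on generators;
   points W(X) -> H by their values on generators. *)
Inductive form (S : signature) : seq nat -> Type :=
| FEq (X : seq nat) : term S (var X) -> term S (var X) -> form S X
| FNeg (X : seq nat) : form S X -> form S X
| FEx (X : seq nat) (x : nat) : x \in X -> form S X -> form S X
| FOr (X : seq nat) : form S X -> form S X -> form S X
| FAnd (X : seq nat) : form S X -> form S X -> form S X
| FSub (X Y : seq nat) : (var X -> term S (var Y)) -> form S X -> form S Y.

Fixpoint Val (S : signature) (H : algebra S) (X : seq nat) (u : form S X)
  : (var X -> H) -> Prop :=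
  match u in form _ X0 return (var X0 -> H) -> Prop with
  | FEq _ w w' => fun mu => eval mu w = eval mu w'
  | FNeg _ u1 => fun mu => ~ @Val S H _ u1 mu
  | FEx X0 x _ u1 => fun mu =>
      exists nu : var X0 -> H, (forall v : var X0, sval v <> x -> nu v = mu v) /\ @Val S H _ u1 nu
  | FOr _ u1 u2 => fun mu => @Val S H _ u1 mu \/ @Val S H _ u2 mu
  | FAnd _ u1 u2 => fun mu => @Val S H _ u1 mu /\ @Val S H _ u2 mu
  | FSub _ _ s u1 => fun mu => @Val S H _ u1 (fun v => eval mu (s v))
  end.

Definition LKer (S : signature) (H : algebra S) (X : seq nat) (mu : var X -> H)
  : form S X -> Prop := fun u => @Val S H X u mu.

(* First-order formulas with equality of signature S; variable x_k is k. *)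
Inductive fo (S : signature) : Type :=
| FOEq : term S nat -> term S nat -> fo S
| FONeg : fo S -> fo S
| FOAnd : fo S -> fo S -> fo S
| FOOr : fo S -> fo S -> fo S
| FOImp : fo S -> fo S -> fo S
| FOEx : nat -> fo S -> fo S
| FOAll : nat -> fo S -> fo S.

Fixpoint occurs (S : signature) (x : nat) (t : term S nat) : Prop :=
  match t with
  | Var y => x = y
  | Op f args => exists i, occurs x (args i)
  end.

Fixpoint free_in (S : signature) (x : nat) (u : fo S) : Prop :=
  match u with
  | FOEq t1 t2 => occurs x t1 \/ occurs x t2
  | FONeg u1 => free_in x u1
  | FOAnd u1 u2 | FOOr u1 u2 | FOImp u1 u2 => free_in x u1 \/ free_in x u2
  | FOEx y u1 | FOAll y u1 => x <> y /\ free_in x u1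
  end.

Definition upd (A : Type) (e : nat -> A) (x : nat) (c : A) : nat -> A :=
  fun k => if k == x then c else e k.

Fixpoint sat (S : signature) (H : algebra S) (e : nat -> H) (u : fo S) : Prop :=
  match u with
  | FOEq t1 t2 => eval e t1 = eval e t2
  | FONeg u1 => ~ @sat S H e u1
  | FOAnd u1 u2 => @sat S H e u1 /\ @sat S H e u2
  | FOOr u1 u2 => @sat S H e u1 \/ @sat S H e u2
  | FOImp u1 u2 => @sat S H e u1 -> @sat S H e u2
  | FOEx y u1 => exists c : H, @sat S H (upd e y c) u1
  | FOAll y u1 => forall c : H, @sat S H (upd e y c) u1
  end.

(* Assignment x_k |-> a_k (k = 1..n) for a tuple a : 'I_n -> H (a_k is a (k-1));
   other variables get the default d (irrelevant for the formulas considered). *)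
Definition tenv (H : Type) (n : nat) (a : 'I_n -> H) (d : H) (k : nat) : H :=
  if (0 < k) then odflt d (omap a (insub k.-1)) else d.

Definition tp (S : signature) (H : algebra S) (n : nat) (a : 'I_n -> H) (d : H)
  : fo S -> Prop :=
  fun u => (forall x, free_in x u -> 0 < x <= n) /\ @sat S H (tenv a d) u.

Definition Xn (n : nat) : seq nat := iota 1 n.

Definition tpoint (H : Type) (n : nat) (a : 'I_n -> H) (d : H) : var (Xn n) -> H :=
  fun v => tenv a d (sval v).

(* Main.v *)
Require Import Defs.
From mathcomp Require Import all_boot.
From Stdlib Require Import Classical FunctionalExtensionality PropExtensionality.
Set Implicit Arguments. Unset Strict Implicit.

Section T.
Variable S : signature.

Fixpoint tsubst (V W : Type) (sg : V -> term S W) (t : term S V) : term S W :=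
  match t with
  | Var v => sg v
  | Op f args => Op f (fun i => tsubst sg (args i))
  end.

Lemma eval_tsubst (H : algebra S) V W (sg : V -> term S W) (e : W -> H) t :
  eval e (tsubst sg t) = eval (fun v => eval e (sg v)) t.
Proof.
elim: t => [v|f args IH] //=; congr (ops _); apply: functional_extensionality => i; exact: IH.
Qed.

Lemma occurs_tsubst V (sg : V -> term S nat) t x :
  occurs x (tsubst sg t) -> exists v, occurs x (sg v).
Proof.
elim: t => [v|f args IH] /=; first by exists v.
by case=> i /IH.
Qed.

Lemma eval_ext (H : algebra S) (e e' : nat -> H) t :
  (forall x, occurs x t -> e x = e' x) -> eval e t = eval e' t.
Proof.
elim: t => [v|f args IH] /= h; first exact: h.
congr (ops _); apply: functional_extensionality => i; apply: IH => x hx; apply: h; by exists i.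
Qed.

Fixpoint F (X : seq nat) (u : form S X) {struct u} : (var X -> term S nat) -> nat -> fo S :=
  match u in form _ X0 return (var X0 -> term S nat) -> nat -> fo S with
  | FEq _ w w' => fun sg k => FOEq (tsubst sg w) (tsubst sg w')
  | FNeg _ u1 => fun sg k => FONeg (F u1 sg k)
  | FEx X0 x _ u1 => fun sg k =>
      FOEx k (F u1 (fun v : var X0 => if val v == x then Var k else sg v) k.+1)
  | FOr _ u1 u2 => fun sg k => FOOr (F u1 sg k) (F u2 sg k)
  | FAnd _ u1 u2 => fun sg k => FOAnd (F u1 sg k) (F u2 sg k)
  | FSub _ _ s u1 => fun sg k => F u1 (fun v => tsubst sg (s v)) k
  end.

Lemma F_free X (u : form S X) : forall sg k x, free_in x (F u sg k) -> exists v, occurs x (sg v).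
Proof.
elim: X / u => /=.
- move=> X w w' sg k x [] /occurs_tsubst; done.
- move=> X u IH sg k x; exact: IH.
- move=> X y hy u IH sg k x [nk /IH [v]]; case: eqP => _ /=; last by exists v.
  by move=> ex; case: nk.
- move=> X u1 IH1 u2 IH2 sg k x [/IH1|/IH2]; done.
- move=> X u1 IH1 u2 IH2 sg k x [/IH1|/IH2]; done.
- move=> X Y s u IH sg k x /IH [v /occurs_tsubst]; done.
Qed.

Lemma F_correct (H : algebra S) X (u : form S X) : forall sg k (e : nat -> H),
  (forall v x, occurs x (sg v) -> x < k) ->
  (sat e (F u sg k) <-> Val u (fun v => eval e (sg v))).
Proof.
elim: X / u => /=.
- move=> X w w' sg k e _; rewrite !eval_tsubst; done.
- move=> X u IH sg k e hb; rewrite IH //.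
- move=> X y hy u IH sg k e hb.
  have hb' : forall c v, eval (upd e k c) (if val v == y then Var k else sg v)
                       = if val v == y then c else eval e (sg v).
    move=> c v; case: eqP => _ /=; first by rewrite /upd eqxx.
    apply: eval_ext => x hx; rewrite /upd; case: eqP => // ex.
    by move: (hb v x hx); rewrite ex ltnn.
  split.
  + case=> c; rewrite IH; last first.
      move=> v x; case: eqP => _ /=; first by move=> ->.
      by move/hb => /ltnW; rewrite ltnS.
    move=> hv; exists (fun v => if val v == y then c else eval e (sg v)); split.
      by move=> v /eqP /negbTE ->.
    by move: hv; congr (Val _ _); apply: functional_extensionality => v; rewrite hb'.
  + case=> nu [hag hv]; exists (nu (exist _ y hy)); rewrite IH; last first.
      move=> v x; case: eqP => _ /=; first by move=> ->.
      by move/hb => /ltnW; rewrite ltnS.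
    move: hv; congr (Val _ _); apply: functional_extensionality => v; rewrite hb'.
    case: eqP => [ev|nv]; last by rewrite hag.
    by have -> : v = exist _ y hy by apply: val_inj.
- move=> X u1 IH1 u2 IH2 sg k e hb; rewrite IH1 // IH2 //.
- move=> X u1 IH1 u2 IH2 sg k e hb; rewrite IH1 // IH2 //.
- move=> X Y s u IH sg k e hb; rewrite IH; last first.
    by move=> v x /occurs_tsubst [w /hb].
  suff -> : (fun v => eval e (tsubst sg (s v))) = (fun v => eval (fun w => eval e (sg w)) (s v)) by [].
  by apply: functional_extensionality => v; rewrite eval_tsubst.
Qed.

Fixpoint tmax (t : term S nat) : nat :=
  match t with
  | Var k => k
  | Op f args => \max_(i < arity f) tmax (args i)
  end.

Lemma occurs_tmax t x : occurs x t -> x <= tmax t.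
Proof.
elim: t => [v|f args IH] /=; first by move=> ->.
case=> i /IH h; apply: leq_trans h _; exact: (leq_bigmax i).
Qed.

Fixpoint fmax (u : fo S) : nat :=
  match u with
  | FOEq t1 t2 => maxn (tmax t1) (tmax t2)
  | FONeg u1 => fmax u1
  | FOAnd u1 u2 | FOOr u1 u2 | FOImp u1 u2 => maxn (fmax u1) (fmax u2)
  | FOEx y u1 | FOAll y u1 => maxn y (fmax u1)
  end.

Lemma sat_ext (H : algebra S) u : forall (e e' : nat -> H),
  (forall x, free_in x u -> e x = e' x) -> (sat e u <-> sat e' u).
Proof.
elim: u => /=.
- move=> t1 t2 e e' h; rewrite (@eval_ext _ e e' t1); last by move=> x hx; apply: h; left.
  by rewrite (@eval_ext _ e e' t2); last by move=> x hx; apply: h; right.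
- by move=> u IH e e' h; rewrite (IH e e').
- by move=> u1 IH1 u2 IH2 e e' h; rewrite (IH1 e e') ?(IH2 e e') // => x hx; apply: h; auto.
- by move=> u1 IH1 u2 IH2 e e' h; rewrite (IH1 e e') ?(IH2 e e') // => x hx; apply: h; auto.
- by move=> u1 IH1 u2 IH2 e e' h; rewrite (IH1 e e') ?(IH2 e e') // => x hx; apply: h; auto.
- move=> y u IH e e' h; split; case=> c hc; exists c.
    by rewrite -(IH (upd e y c)) // => x hx; rewrite /upd; case: eqP => // nx; apply: h.
  by rewrite (IH _ (upd e' y c)) // => x hx; rewrite /upd; case: eqP => // nx; apply: h.
- move=> y u IH e e' h; split=> hc c.
    by rewrite -(IH (upd e y c)) // => x hx; rewrite /upd; case: eqP => // nx; apply: h.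
  by rewrite (IH _ (upd e' y c)) // => x hx; rewrite /upd; case: eqP => // nx; apply: h.
Qed.

Definition tm (Y : seq nat) (d : var Y) (t : term S nat) : term S (var Y) :=
  tsubst (fun k => Var (insubd d k)) t.

Definition gex (Y : seq nat) (d : var Y) (y : nat) (p : form S Y) : form S Y :=
  @FEx S Y (val (insubd d y)) (valP (insubd d y)) p.

Fixpoint G (Y : seq nat) (d : var Y) (u : fo S) : form S Y :=
  match u with
  | FOEq t1 t2 => FEq (tm d t1) (tm d t2)
  | FONeg u1 => FNeg (G d u1)
  | FOAnd u1 u2 => FAnd (G d u1) (G d u2)
  | FOOr u1 u2 => FOr (G d u1) (G d u2)
  | FOImp u1 u2 => FOr (FNeg (G d u1)) (G d u2)
  | FOEx y u1 => gex d y (G d u1)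
  | FOAll y u1 => FNeg (gex d y (FNeg (G d u1)))
  end.

Lemma gex_iff (H : algebra S) (Y : seq nat) (d : var Y) y (hy : y \in Y)
  (P : (var Y -> H) -> Prop) (e : nat -> H) :
  (exists nu : var Y -> H, (forall v : var Y, val v <> val (insubd d y) -> nu v = e (val v)) /\ P nu)
  <-> exists c, P (fun v => upd e y c (val v)).
Proof.
rewrite val_insubd hy; split.
- case=> nu [hag hp]; exists (nu (insubd d y)); move: hp.
  suff E : (fun v => upd e y (nu (insubd d y)) (val v)) = nu by rewrite E.
  apply: functional_extensionality => v; rewrite /upd; case: eqP => [ev|nv]; last by rewrite hag.
  by have -> : v = insubd d y by apply: val_inj; rewrite val_insubd hy.
- case=> c hp; exists (fun v => upd e y c (val v)); split => // v nv.
  by rewrite /upd; case: eqP.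
Qed.

Lemma G_correct (H : algebra S) (Y : seq nat) (d : var Y) u : forall (e : nat -> H),
  (forall k, k <= fmax u -> k \in Y) ->
  (Val (G d u) (fun v => e (val v)) <-> sat e u).
Proof.
elim: u => /=.
- move=> t1 t2 e hY; rewrite /tm !eval_tsubst /=.
  rewrite (@eval_ext _ _ e t1); last first.
    move=> x /occurs_tmax hx; rewrite val_insubd hY //; apply: leq_trans hx (leq_maxl _ _).
  rewrite (@eval_ext _ _ e t2) //.
    move=> x /occurs_tmax hx; rewrite val_insubd hY //; apply: leq_trans hx (leq_maxr _ _).
- by move=> u IH e hY; rewrite IH.
- move=> u1 IH1 u2 IH2 e hY.
  have h1 : forall k, k <= fmax u1 -> k \in Y by move=> k hk; apply: hY; rewrite leq_max hk.
  have h2 : forall k, k <= fmax u2 -> k \in Y by move=> k hk; apply: hY; rewrite leq_max hk orbT.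
  by rewrite IH1 // IH2.
- move=> u1 IH1 u2 IH2 e hY.
  have h1 : forall k, k <= fmax u1 -> k \in Y by move=> k hk; apply: hY; rewrite leq_max hk.
  have h2 : forall k, k <= fmax u2 -> k \in Y by move=> k hk; apply: hY; rewrite leq_max hk orbT.
  by rewrite IH1 // IH2.
- move=> u1 IH1 u2 IH2 e hY.
  have h1 : forall k, k <= fmax u1 -> k \in Y by move=> k hk; apply: hY; rewrite leq_max hk.
  have h2 : forall k, k <= fmax u2 -> k \in Y by move=> k hk; apply: hY; rewrite leq_max hk orbT.
  rewrite IH1 // IH2 //.
  split=> [[a1 a2|a2 _]|h]; [by case: a1|by []|].
  by case: (classic (sat e u1)) => a1; [right; exact: h a1|left].
- move=> y u IH e hY.
  have hy : y \in Y by apply: hY; rewrite leq_maxl.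
  have hu : forall k, k <= fmax u -> k \in Y by move=> k hk; apply: hY; rewrite leq_max hk orbT.
  rewrite (gex_iff d hy (Val (G d u)) e).
  by split; case=> c hc; exists c; move: hc; rewrite IH.
- move=> y u IH e hY.
  have hy : y \in Y by apply: hY; rewrite leq_maxl.
  have hu : forall k, k <= fmax u -> k \in Y by move=> k hk; apply: hY; rewrite leq_max hk orbT.
  rewrite (gex_iff d hy (fun nu => ~ Val (G d u) nu) e).
  split.
  + move=> hn c; apply: NNPP => hc; apply: hn; exists c; rewrite IH //.
  + by move=> hall [c]; rewrite IH //; apply.
Qed.
End T.

Lemma d0_proof N : 0 \in iota 0 N.+1.
Proof. by rewrite mem_iota. Qed.

Lemma x1_proof n : 0 < n -> 1 \in Xn n.
Proof. by move=> hn; rewrite /Xn mem_iota leqnn /= add1n ltnS. Qed.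

Lemma inXn n x : (x \in Xn n) = (0 < x <= n).
Proof. by rewrite /Xn mem_iota add1n ltnS. Qed.

Definition Yof (S : signature) n (u : fo S) := iota 0 (maxn (fmax u) n).+1.

Lemma key1 (S : signature) (H : algebra S) n (hn : 0 < n) (c : 'I_n -> H) (c0 : H) (u : fo S) :
  (forall x, free_in x u -> 0 < x <= n) ->
  (sat (tenv c c0) u <->
   Val (FSub (fun v : var (Yof n u) => Var (insubd (exist _ 1 (x1_proof hn) : var (Xn n)) (val v)))
             (G (exist _ 0 (d0_proof _) : var (Yof n u)) u)) (tpoint c c0)).
Proof.
move=> hfree /=.
set x1 := (exist _ 1 (x1_proof hn) : var (Xn n)).
set E := fun k => tenv c c0 (val (insubd x1 k)).
change (sat (tenv c c0) u <-> Val (G (exist _ 0 (d0_proof _) : var (Yof n u)) u) (fun v => E (val v))).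
rewrite G_correct; last first.
  by move=> k hk; rewrite /Yof mem_iota /= add0n ltnS leq_max hk.
apply: sat_ext => x /hfree hx; rewrite /E val_insubd inXn hx //.
Qed.

Lemma key2 (S : signature) (H : algebra S) n (c : 'I_n -> H) (c0 : H) (u : form S (Xn n)) :
  Val u (tpoint c c0) <-> tp c c0 (F u (fun v => Var (val v)) n.+1).
Proof.
rewrite /tp F_correct; last by move=> v x /= ->; have := valP v; rewrite inXn ltnS => /andP[].
split; last by case.
move=> hv; split => // x /F_free [v /= ->]; have := valP v; by rewrite inXn.
Qed.

Theorem mainTheorem1 (S : signature) (Th : identities S)
  (H1 H2 : algebra S) (hH1 : is_Theta_algebra Th H1) (hH2 : is_Theta_algebra Th H2)
  (n : nat) (hn : 0 < n) (a : 'I_n -> H1) (b : 'I_n -> H2) :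
  let a0 := a (Ordinal hn) in
  let b0 := b (Ordinal hn) in
  LKer (tpoint a a0) = LKer (tpoint b b0) <-> tp a a0 = tp b b0.
Proof.
move=> a0 b0; split => hE.
- have hE' : forall w, Val w (tpoint a a0) = Val w (tpoint b b0).
    by move=> w; exact: (f_equal (fun P => P w) hE).
  apply: functional_extensionality => u; apply: propositional_extensionality.
  rewrite /tp; split; case=> hf hs; split => //.
    by move: hs; rewrite (key1 hn) // (key1 hn) // hE'.
  by move: hs; rewrite (key1 hn) // (key1 hn) // hE'.
- apply: functional_extensionality => u; apply: propositional_extensionality.
  rewrite /LKer !key2 hE; done.
Qed.
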